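(* Let $G$ be an infinite group and $A\subseteq G$. Then: (i) for $n\in\mathbb{N}$, $A$ is $n$-thin if and only if $|Y|\le n$ for every $Y\in W(A)$; (ii) $A$ is sparse if and only if every $Y\in W(A)$ is finite; (iii) $A$ is scattered if and only if for every subset $B\subseteq A$ there exists a finite subset $Y$ of $G$ lying in the closure (in $\mathcal{P}_G$) of $\{Bb^{-1}: b\in B\}$.
   Context: Identify $\mathcal{P}_G$ with $\{0,1\}^G$ with the product topology, a $G$-space under $(A,g)\mapsto Ag$. For $X\in\mathcal{P}_G$: $[U]_X=\{g: Xg\in U\}$, $T(X)$ is the closure of $\{Xg:g\in G\}$, and $W(X)=\{Y\in T(X): [U]_X$ infinite for every neighbourhood $U$ of $Y\}$. $A$ is $n$-thin if for all distinct $g_0,\dots,g_n\in G$ the set $g_0A\cap\dots\cap g_nA$ is finite. $A$ is sparse if for every infinite $X\subseteq G$ there is finite $F\subseteq X$ with $\bigcap_{g\in F}gA$ finite. Identify $\beta G$ with the set of ultrafilters on $G$ with its usual semigroup extension of the multiplication ($gp=\{gP:P\in p\}$); $G^*$ is the set of free ultrafilters and for $X\subseteq G$, $X^*=\{p\in G^*: X\in p\}$. For $p\in G^*$, $\Delta_p(X)=X^*\cap Gp=\{gp: g\in G, X\in gp\}$. $A$ is scattered if for every infinite $X\subseteq A$ there is $p\in X^*$ with $\Delta_p(X)$ finite. *)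

(* Defs.v *)
From Stdlib Require Import List Arith.
Import ListNotations.
Set Implicit Arguments.

Record group := Group {
  carrier :> Type;
  mul : carrier -> carrier -> carrier;
  one : carrier;
  inv : carrier -> carrier;
  mulA : forall x y z, mul x (mul y z) = mul (mul x y) z;
  mul1g : forall x, mul one x = x;
  mulg1 : forall x, mul x one = x;
  mulVg : forall x, mul (inv x) x = one;
  mulgV : forall x, mul x (inv x) = one
}.

Section Defs.
Variable G : group.
Local Notation "x * y" := (mul G x y).

(* subsets of G, i.e. points of P_G = {0,1}^G *)
Definition subset := G -> Prop.

Definition finite {T : Type} (S : T -> Prop) : Prop :=
  exists l : list T, forall x, S x -> In x l.
Definition infinite {T : Type} (S : T -> Prop) : Prop := ~ finite S.

Definition card_le {T : Type} (S : T -> Prop) (n : nat) : Prop :=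
  exists l : list T, length l <= n /\ forall x, S x -> In x l.

Definition ltrans (g : G) (A : subset) : subset := fun x => exists a, A a /\ x = g * a.
Definition rtrans (A : subset) (g : G) : subset := fun x => exists a, A a /\ x = a * g.

(* product topology on {0,1}^G: U is a neighbourhood of Y iff it contains a
   basic open set {Z : Z and Y agree on a finite set F}. *)
Definition nbhd (Y : subset) (U : subset -> Prop) : Prop :=
  exists F : list G, forall Z : subset, (forall x, In x F -> (Z x <-> Y x)) -> U Z.

Definition closure (S : subset -> Prop) (Y : subset) : Prop :=
  forall U, nbhd Y U -> exists Z, S Z /\ U Z.

Definition hit (U : subset -> Prop) (X : subset) : subset := fun g => U (rtrans X g).

Definition Tcl (X : subset) : subset -> Prop :=
  closure (fun Z => exists g, Z = rtrans X g).

Definition W (X : subset) : subset -> Prop :=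
  fun Y => Tcl X Y /\ forall U, nbhd Y U -> infinite (hit U X).

Definition thin (n : nat) (A : subset) : Prop :=
  forall l : list G, NoDup l -> length l = S n ->
    finite (fun x => forall g, In g l -> ltrans g A x).

Definition sparse (A : subset) : Prop :=
  forall X : subset, infinite X ->
    exists F : list G, (forall g, In g F -> X g) /\
      finite (fun x => forall g, In g F -> ltrans g A x).

Definition ultrafilter (p : subset -> Prop) : Prop :=
  p (fun _ => True) /\ ~ p (fun _ => False) /\
  (forall P Q : subset, p P -> (forall x, P x -> Q x) -> p Q) /\
  (forall P Q : subset, p P -> p Q -> p (fun x => P x /\ Q x)) /\
  (forall P : subset, p P \/ p (fun x => ~ P x)).

Definition free_ultrafilter (p : subset -> Prop) : Prop :=
  ultrafilter p /\ forall P : subset, p P -> infinite P.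

(* gp = {gP : P in p}; Q in gp iff g^{-1}Q = {y : g y in Q} in p *)
Definition ult_lmul (g : G) (p : subset -> Prop) : subset -> Prop :=
  fun Q => p (fun y => Q (g * y)).

(* Delta_p(X) = X^* \cap Gp = {gp : g in G, X in gp} *)
Definition Delta (p : subset -> Prop) (X : subset) : (subset -> Prop) -> Prop :=
  fun q => exists g, q = ult_lmul g p /\ ult_lmul g p X.

Definition scattered (A : subset) : Prop :=
  forall X : subset, (forall x, X x -> A x) -> infinite X ->
    exists p, free_ultrafilter p /\ p X /\ finite (Delta p X).

End Defs.

(* Main.v *)
Require Import Defs.
From Stdlib Require Import List Arith Lia Classical FunctionalExtensionality PropExtensionality ClassicalEpsilon FinFun.
Import ListNotations.
Section Zorn.
Variable T : Type.
Definition incl_s (x y : T -> Prop) := forall a, x a -> y a.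
Definition Union (K : (T->Prop)->Prop) : T -> Prop := fun a => exists x, K x /\ x a.

Lemma set_ext (x y : T -> Prop) : incl_s x y -> incl_s y x -> x = y.
Proof. intros H1 H2. apply functional_extensionality; intro a.
  apply propositional_extensionality; split; auto. Qed.

Variable x0 : T -> Prop.

Section Tower.
Variable s : (T->Prop) -> (T->Prop).
Hypothesis s_infl : forall x, incl_s x (s x).
Inductive tower : (T->Prop) -> Prop :=
| tw_base : tower x0
| tw_succ x : tower x -> tower (s x)
| tw_union K : (forall x, K x -> tower x) -> (exists x, K x) -> tower (Union K).

Lemma tower_ge0 x : tower x -> incl_s x0 x.
Proof.
  induction 1 as [| x Hx IH | K HK IH Hne].
  - intros a h; exact h.
  - intros a h; apply s_infl; auto.
  - destruct Hne as [k Hk]. intros a h. exists k; split; auto. apply (IH k Hk a h).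
Qed.

Definition strict (y x : T -> Prop) := incl_s y x /\ ~ incl_s x y.
Definition extreme x := forall y, tower y -> strict y x -> incl_s (s y) x.

Lemma lem1 x : tower x -> extreme x -> forall y, tower y -> incl_s y x \/ incl_s (s x) y.
Proof.
  intros Tx Ex y Ty.
  induction Ty as [| y Hy IH | K HK IH Hne].
  - left; apply tower_ge0; auto.
  - destruct IH as [IH|IH].
    + destruct (classic (incl_s x y)) as [Hxy|Hxy].
      * right. rewrite (set_ext y x IH Hxy). intros a h; exact h.
      * left. apply Ex; auto. split; auto.
    + right. intros a h. apply s_infl; auto.
  - destruct (classic (exists k, K k /\ incl_s (s x) k)) as [[k [Hk Hsk]]|Hn].
    + right. intros a h. exists k; split; auto.
    + left. intros a [k [Hk Hka]].
      destruct (IH k Hk) as [H|H]; auto.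
      exfalso; apply Hn; exists k; auto.
Qed.

Lemma lem2 x : tower x -> extreme x.
Proof.
  induction 1 as [| x Hx IH | K HK IH Hne].
  - intros y Ty [H1 H2]. exfalso; apply H2. apply tower_ge0; auto.
  - intros y Ty [H1 H2].
    destruct (lem1 x Hx IH y Ty) as [H|H].
    + destruct (classic (incl_s x y)) as [Hxy|Hxy].
      * rewrite (set_ext y x H Hxy). intros a h; exact h.
      * intros a h. apply s_infl. apply (IH y Ty); auto. split; auto.
    + contradiction.
  - intros y Ty [H1 H2].
    destruct (classic (exists k, K k /\ ~ incl_s (s k) y)) as [[k [Hk Hsk]]|Hn].
    + destruct (lem1 k (HK k Hk) (IH k Hk) y Ty) as [H|H]; [|contradiction].
      destruct (classic (incl_s k y)) as [Hky|Hky].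
      * assert (E : y = k) by (apply set_ext; auto). subst y.
        apply NNPP; intro Hc. apply H2. intros a [k' [Hk' Hak']].
        destruct (lem1 k (HK k Hk) (IH k Hk) k' (HK k' Hk')) as [H3|H3]; auto.
        exfalso; apply Hc. intros b hb. exists k'; split; auto.
      * intros a h. exists k; split; auto. apply (IH k Hk y Ty); auto. split; auto.
    + exfalso. apply H2. intros a [k [Hk Hak]].
      apply NNPP; intro Hya. apply Hn. exists k; split; auto.
      intro Hc. apply Hya. apply Hc. apply s_infl; auto.
Qed.

Lemma tower_chain x y : tower x -> tower y -> incl_s x y \/ incl_s y x.
Proof.
  intros Tx Ty. destruct (lem1 x Tx (lem2 x Tx) y Ty) as [H|H]; auto.
  left. intros a h. apply H. apply s_infl; auto.
Qed.
End Tower.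

Variable P : (T->Prop) -> Prop.
Hypothesis Px0 : P x0.
Hypothesis Pchain : forall K, (forall x, K x -> P x) -> (exists x, K x) ->
  (forall x y, K x -> K y -> incl_s x y \/ incl_s y x) -> P (Union K).

Theorem zorn : exists m, P m /\ incl_s x0 m /\ forall y, P y -> incl_s m y -> incl_s y m.
Proof.
  apply NNPP; intro Hno.
  assert (Hs : forall x, exists y, incl_s x y /\ (P x /\ incl_s x0 x -> P y /\ ~ incl_s y x)).
  { intro x. destruct (classic (P x /\ incl_s x0 x)) as [[Hx H0x]|Hn].
    - apply NNPP; intro Hn. apply Hno. exists x. repeat split; auto.
      intros y Py Hxy. apply NNPP; intro Hyx. apply Hn. exists y; split; auto.
    - exists x. split; [intros a h; exact h|]. intro; contradiction. }
  set (s := fun x => epsilon (inhabits x) (fun y => incl_s x y /\ (P x /\ incl_s x0 x -> P y /\ ~ incl_s y x))).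
  assert (Hs' : forall x, incl_s x (s x) /\ (P x /\ incl_s x0 x -> P (s x) /\ ~ incl_s (s x) x)).
  { intro x. apply (epsilon_spec (inhabits x) _ (Hs x)). }
  assert (infl : forall x, incl_s x (s x)) by (intro x; apply Hs').
  assert (TP : forall x, tower s x -> P x).
  { induction 1 as [| x Hx IH | K HK IH Hne]; auto.
    - apply Hs'. split; auto. apply tower_ge0 with s; auto.
    - apply Pchain; auto. intros; apply tower_chain with s; auto. }
  set (u := Union (tower s)).
  assert (Tu : tower s u) by (apply tw_union; [auto | exists x0; constructor]).
  destruct (Hs' u) as [_ H]. destruct H as [_ H]. split; auto. apply tower_ge0 with s; auto.
  apply H. intros a h. exists (s u); split; auto. constructor; auto.
Qed.
End Zorn.

Section UF.
Variable G : group.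
Local Notation X := (carrier G).
Definition FIP (F : (X -> Prop) -> Prop) :=
  forall L : list (X -> Prop), (forall P, In P L -> F P) -> exists x, forall P, In P L -> P x.
Definition addf (F : (X->Prop)->Prop) Q := fun P => F P \/ P = Q.

Lemma split_list F Q L : (forall P, In P L -> addf F Q P) ->
  exists L', (forall P, In P L' -> F P) /\ forall P, In P L -> In P L' \/ P = Q.
Proof.
  induction L as [|a L IH]; intros H.
  - exists []; split; simpl; tauto.
  - destruct IH as [L' [H1 H2]]. intros; apply H; simpl; auto.
    destruct (H a (or_introl eq_refl)) as [Ha|Ha].
    + exists (a :: L'). split. intros P [<-|HP]; auto.
      intros P [<-|HP]; simpl; auto. destruct (H2 P HP); auto.
    + exists L'. split; auto. intros P [<-|HP]; auto.
Qed.

Lemma addf_FIP F Q : (forall L, (forall P, In P L -> F P) -> exists x, Q x /\ forall P, In P L -> P x) ->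
  FIP (addf F Q).
Proof.
  intros H L HL. destruct (split_list F Q L HL) as [L' [H1 H2]].
  destruct (H L' H1) as [x [Hq Hx]]. exists x. intros P HP.
  destruct (H2 P HP) as [h|h]; [exact (Hx P h)|subst; auto].
Qed.

Lemma ex_uf (S : (X->Prop)->Prop) : FIP S -> exists p, ultrafilter p /\ forall P, S P -> p P.
Proof.
  intro HS.
  destruct (zorn (X->Prop) S FIP HS) as [F [HF [HSF Hmax]]].
  { intros K HK [k Hk] Hch L HL.
    assert (exists k', K k' /\ forall P, In P L -> k' P) as [k' [Hk' HL']].
    { clear HK. induction L as [|a L IH].
      - exists k; split; simpl; tauto.
      - destruct IH as [k1 [Hk1 H1]]. intros; apply HL; simpl; auto.
        destruct (HL a (or_introl eq_refl)) as [k2 [Hk2 H2]].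
        destruct (Hch k1 k2 Hk1 Hk2) as [E|E].
        + exists k2; split; auto. intros P [<-|HP]; [exact H2|apply E; auto].
        + exists k1; split; auto. intros P [<-|HP]; [apply E; exact H2|auto]. }
    apply (HK k' Hk' L HL'). }
  assert (Hadd : forall Q, FIP (addf F Q) -> F Q).
  { intros Q HQ. apply (Hmax (addf F Q) HQ). intros P h; left; exact h. right; reflexivity. }
  exists F. split; [|exact HSF].
  assert (Hup : forall P Q, F P -> (forall x, P x -> Q x) -> F Q).
  { intros P Q HP HPQ. apply Hadd. apply addf_FIP. intros L HL.
    destruct (HF (P :: L)) as [x Hx]. intros R [<-|HR]; auto.
    exists x. split; auto. apply HPQ, Hx; simpl; auto. intros; apply Hx; simpl; auto. }
  split; [|split; [|split; [|split]]].
  - apply Hadd. apply addf_FIP. intros L HL. destruct (HF L HL) as [x Hx]. exists x; auto.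
  - intro Hf. destruct (HF [fun _ => False]) as [x Hx]. intros P [<-|[]]; auto.
    apply (Hx _ (or_introl eq_refl)).
  - exact Hup.
  - intros P Q HP HQ. apply Hadd. apply addf_FIP. intros L HL.
    destruct (HF (P :: Q :: L)) as [x Hx]. intros R [<-|[<-|HR]]; auto.
    exists x. split. split; apply Hx; simpl; auto. intros; apply Hx; simpl; auto.
  - intro P. apply NNPP; intro Hn. apply not_or_and in Hn as [H1 H2].
    apply H1. apply Hadd. apply addf_FIP. intros L1 HL1. apply NNPP; intro Hn1.
    apply H2. apply Hadd. apply addf_FIP. intros L2 HL2.
    destruct (HF (L1 ++ L2)) as [x Hx]. intros R HR; apply in_app_or in HR as [h|h]; auto.
    exists x. split.
    + intro Px. apply Hn1. exists x. split; auto. intros; apply Hx, in_or_app; auto.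
    + intros; apply Hx, in_or_app; auto.
Qed.

Lemma ex_free_uf (S : (X->Prop)->Prop) :
  (forall L, (forall P, In P L -> S P) -> infinite (fun x => forall P, In P L -> P x)) ->
  exists p, free_ultrafilter p /\ forall P, S P -> p P.
Proof.
  intro HS.
  set (S' := fun P => S P \/ exists l : list X, forall x, ~ In x l -> P x).
  destruct (ex_uf S') as [p [Hp HSp]].
  - intros L HL.
    assert (exists LS E, (forall P, In P LS -> S P) /\
      forall x, (forall P, In P LS -> P x) -> ~ In x E -> forall P, In P L -> P x) as [LS [E [H1 H2]]].
    { clear -HL. induction L as [|a L IH].
      - exists [], []. split; simpl; tauto.
      - destruct IH as [LS [E [H1 H2]]]. intros; apply HL; simpl; auto.
        destruct (HL a (or_introl eq_refl)) as [Ha|[l Hl]].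
        + exists (a :: LS), E. split. intros P [<-|h]; auto.
          intros x Hx HE P [<-|h]. apply Hx; simpl; auto.
          apply H2; auto. intros; apply Hx; simpl; auto.
        + exists LS, (l ++ E). split; auto.
          intros x Hx HE P [<-|h].
          apply Hl. intro; apply HE, in_or_app; auto.
          apply H2; auto. intro; apply HE, in_or_app; auto. }
    apply NNPP; intro Hn. apply (HS LS H1). exists E. intros x Hx.
    apply NNPP; intro HE. apply Hn. exists x. apply H2; auto.
  - exists p. split; [|intros P HP; apply HSp; left; auto].
    split; auto. intros P HP [l Hl].
    destruct Hp as [_ [Hf [Hup [Hint _]]]].
    apply Hf. apply Hup with (fun x => P x /\ ~ P x).
    apply Hint; auto. apply HSp. right. exists l. intros x Hx HPx. apply Hx, Hl, HPx.
    intros x [a b]; auto.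
Qed.
End UF.

Section Main.
Variable G : group.
Local Notation "x * y" := (mul G x y).
Local Notation inv := (inv G).
Local Notation one := (one G).

Lemma inv_l g a : inv g * (g * a) = a.
Proof. rewrite mulA, mulVg, mul1g; auto. Qed.
Lemma inv_r a g : (a * g) * inv g = a.
Proof. rewrite <- mulA, mulgV, mulg1; auto. Qed.
Lemma inv_r' a g : (a * inv g) * g = a.
Proof. rewrite <- mulA, mulVg, mulg1; auto. Qed.
Lemma inv_inv g : inv (inv g) = g.
Proof.
  rewrite <- (mulg1 G (inv (inv g))), <- (mulVg G g), mulA, mulVg, mul1g; auto.
Qed.
Lemma inv_inj : forall x y, inv x = inv y -> x = y.
Proof. intros x y H. rewrite <- (inv_inv x), <- (inv_inv y), H; auto. Qed.

Lemma rtrans_inv (B : subset G) b x : rtrans B (inv b) x <-> B (x * b).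
Proof.
  split.
  - intros [a [Ha ->]]. rewrite inv_r'. auto.
  - intro H. exists (x * b). split; auto. rewrite inv_r; auto.
Qed.

Lemma finite_inv (P S : subset G) : finite S -> (forall x, P x -> S (inv x)) -> finite P.
Proof.
  intros [l Hl] H. exists (map inv l). intros x Px.
  rewrite <- (inv_inv x). apply in_map. apply Hl, H, Px.
Qed.

Lemma fin_inj {Q : Type} (f : G -> Q) : (forall x y, f x = f y -> x = y) ->
  forall l (Y : subset G), (forall g, Y g -> In (f g) l) -> finite Y.
Proof.
  intros Hinj l. induction l as [|q l IH]; intros Y HY.
  - exists []. intros x Hx. destruct (HY x Hx).
  - destruct (classic (exists g, Y g /\ f g = q)) as [[g0 [Hg0 Hq]]|Hn].
    + destruct (IH (fun g => Y g /\ g <> g0)) as [l0 Hl0].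
      { intros g [Hg Hne]. destruct (HY g Hg) as [E|E]; auto.
        exfalso; apply Hne, Hinj. congruence. }
      exists (g0 :: l0). intros x Hx. destruct (classic (x = g0)) as [->|Hne]; simpl; auto.
    + apply IH. intros g Hg. destruct (HY g Hg) as [E|E]; auto.
      exfalso; apply Hn; exists g; auto.
Qed.

Lemma uf_up p (P Q : subset G) : ultrafilter p -> p P -> (forall x, P x -> Q x) -> p Q.
Proof. intros [_ [_ [H _]]]; eauto. Qed.
Lemma uf_int p (P Q : subset G) : ultrafilter p -> p P -> p Q -> p (fun x => P x /\ Q x).
Proof. intros [_ [_ [_ [H _]]]]; eauto. Qed.
Lemma uf_ne p (P : subset G) : ultrafilter p -> p P -> exists x, P x.
Proof.
  intros Hp HP. apply NNPP; intro Hn. destruct Hp as [_ [Hf [Hup _]]].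
  apply Hf. apply Hup with P; auto. intros x Px; apply Hn; eauto.
Qed.
Lemma uf_not p (P : subset G) : ultrafilter p -> ~ p P -> p (fun x => ~ P x).
Proof. intros [_ [_ [_ [_ H]]]] Hn. destruct (H P); tauto. Qed.
Lemma uf_both p (P : subset G) : ultrafilter p -> p P -> p (fun x => ~ P x) -> False.
Proof.
  intros Hp H1 H2. destruct (uf_ne p _ Hp (uf_int p _ _ Hp H1 H2)) as [x [a b]]; auto.
Qed.

Definition Ylim (p : subset G -> Prop) (B : subset G) : subset G := fun y => p (fun x => B (y * x)).

Lemma Tset p B F : ultrafilter p ->
  p (fun x => forall f, In f F -> (B (f * x) <-> Ylim p B f)).
Proof.
  intro Hp. induction F as [|f F IH].
  - apply uf_up with (fun _ => True). apply Hp. apply Hp. intros x _ f [].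
  - destruct (classic (Ylim p B f)) as [Hy|Hy].
    + eapply uf_up. apply Hp. apply (uf_int p _ _ Hp Hy IH). intros x [H1 H2] g [<-|Hg]; auto. tauto.
    + eapply uf_up. apply Hp. apply (uf_int p _ _ Hp (uf_not p _ Hp Hy) IH). intros x [H1 H2] g [<-|Hg]; auto. tauto.
Qed.

Lemma free_inf p (P : subset G) : free_ultrafilter p -> p P -> infinite P.
Proof. intros [_ H]; auto. Qed.

Lemma W_limit p A : free_ultrafilter p -> W A (Ylim p A).
Proof.
  intro Hfp. assert (Hp : ultrafilter p) by apply Hfp. split.
  - intros U [F HF]. destruct (uf_ne p _ Hp (Tset p A F Hp)) as [x Hx].
    exists (rtrans A (inv x)). split. exists (inv x); auto.
    apply HF. intros f Hf. rewrite rtrans_inv. apply Hx; auto.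
  - intros U [F HF] Hfin. apply (free_inf p _ Hfp (Tset p A F Hp)).
    apply finite_inv with (hit U A); auto.
    intros x Hx. unfold hit. apply HF. intros f Hf. rewrite rtrans_inv. apply Hx; auto.
Qed.

Lemma W_incl A Y l : W A Y -> (forall y, In y l -> Y y) ->
  infinite (fun x => forall y, In y l -> ltrans (inv y) A x).
Proof.
  intros [_ HW] Hl Hfin.
  apply (HW (fun Z => forall y, In y l -> Z y)).
  - exists l. intros Z HZ y Hy. apply HZ; auto.
  - apply finite_inv with (1 := Hfin). intros g Hg y Hy.
    destruct (Hg y Hy) as [a [Ha E]]. exists a; split; auto.
    assert (Ea : a = y * inv g) by (rewrite E, inv_r; auto).
    rewrite Ea, inv_l; auto.
Qed.

Lemma p_iff p (P Q : subset G) : ultrafilter p -> (forall x, P x <-> Q x) -> (p P <-> p Q).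
Proof. intros Hp H; split; intro h; eapply uf_up; eauto; intros x; apply H. Qed.

Lemma stab_triv p k : ultrafilter p -> (forall Q : subset G, p (fun y => Q (k*y)) <-> p Q) -> k = one.
Proof.
  intros Hp Hk. apply NNPP; intro Hk1.
  destruct (zorn G (fun _ => False) (fun C => forall y, C y -> C (k*y) -> False)) as [C [HC [_ Hmax]]].
  - intros y [].
  - intros K HK Hne Hch y [c1 [Hc1 h1]] [c2 [Hc2 h2]].
    destruct (Hch c1 c2 Hc1 Hc2) as [E|E].
    + apply (HK c2 Hc2 y); auto.
    + apply (HK c1 Hc1 y); auto.
  - assert (Hcov : forall y, C y \/ C (k*y) \/ C (inv k * y)).
    { intro y. apply NNPP; intro Hn. apply Hn. left.
      refine (Hmax (fun z => C z \/ z = y) _ _ y (or_intror eq_refl)).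
      - intros z [Hz|Hz] [Hkz|Hkz]; try subst z.
        + eauto.
        + apply Hn. right; right. rewrite <- Hkz, inv_l; auto.
        + apply Hn. right; left; auto.
        + apply Hk1. rewrite <- (inv_r k y), Hkz, mulgV; auto.
      - intros a h; left; auto. }
    assert (H1 : ~ p C).
    { intro H. destruct (uf_ne p _ Hp (uf_int p _ _ Hp H (proj2 (Hk C) H))) as [y [a b]]. eauto. }
    assert (H2 : ~ p (fun y => C (k*y))).
    { intro H. destruct (uf_ne p _ Hp (uf_int p _ _ Hp H (proj2 (Hk _) H))) as [y [a b]].
      exact (HC (k*y) a b). }
    assert (H3 : ~ p (fun y => C (inv k * y))).
    { intro H. apply H1. eapply uf_up. apply Hp. apply (proj2 (Hk _) H). simpl.
      intros x; rewrite inv_l; auto. }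
    pose proof (uf_int p _ _ Hp (uf_not p _ Hp H1) (uf_int p _ _ Hp (uf_not p _ Hp H2) (uf_not p _ Hp H3))) as H.
    destruct (uf_ne p _ Hp H) as [y [a [b c]]]. destruct (Hcov y) as [h|[h|h]]; auto.
Qed.

Lemma lmul_inj p (f f' : G) : ultrafilter p -> ult_lmul f p = ult_lmul f' p -> f = f'.
Proof.
  intros Hp E.
  assert (Hk : inv f' * f = one).
  { apply (stab_triv p); auto. intro Q.
    rewrite (p_iff p _ (fun y => Q (inv f' * (f * y))) Hp) by (intro x; rewrite mulA; tauto).
    change (ult_lmul f p (fun z => Q (inv f' * z)) <-> p Q). rewrite E. unfold ult_lmul.
    apply p_iff; auto. intro x; rewrite inv_l; tauto. }
  rewrite <- (mulg1 G f'), <- Hk, mulA, mulgV, mul1g; auto.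
Qed.

Lemma card_nodup (Y : subset G) n l : card_le Y n -> NoDup l -> length l = S n ->
  (forall y, In y l -> Y y) -> False.
Proof.
  intros [l' [Hlen Hl']] Hnd Hl HY.
  pose proof (NoDup_incl_length Hnd (l' := l')). 
  assert (length l <= length l'). { apply H. intros y Hy; apply Hl', HY, Hy. }
  lia.
Qed.

Lemma not_card (Y : subset G) n : ~ card_le Y n ->
  exists l, NoDup l /\ length l = S n /\ forall y, In y l -> Y y.
Proof.
  intro Hn. assert (forall k, k <= S n -> exists l, NoDup l /\ length l = k /\ forall y, In y l -> Y y).
  { induction k as [|k IH]; intros Hk.
    - exists []. repeat split; simpl; auto. constructor. tauto.
    - destruct IH as [l [Hnd [Hlen Hl]]]; [lia|].
      destruct (classic (exists y, Y y /\ ~ In y l)) as [[y [Hy Hyl]]|Hc].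
      + exists (y :: l). repeat split; simpl; auto. constructor; auto.
        intros z [<-|Hz]; auto.
      + exfalso. apply Hn. exists l. split; [lia|]. intros x Hx.
        apply NNPP; intro Hxl. apply Hc; eauto. }
  apply H; auto.
Qed.

Lemma inv_nodup l : NoDup l -> NoDup (map inv l).
Proof. intro H. apply Injective_map_NoDup; auto. intros x y; apply inv_inj. Qed.

Lemma part1 (A : subset G) n : thin n A <-> (forall Y, W A Y -> card_le Y n).
Proof.
  split.
  - intros Hthin Y HW. apply NNPP; intro Hc.
    destruct (not_card Y n Hc) as [l [Hnd [Hlen Hl]]].
    destruct (Hthin (map inv l) (inv_nodup l Hnd)) as [m Hm].
    { rewrite length_map; auto. }
    apply (W_incl A Y l HW Hl). exists m. intros x Hx. apply Hm.
    intros g Hg. apply in_map_iff in Hg as [y [<- Hy]]. apply Hx; auto.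
  - intros H l Hnd Hlen. apply NNPP; intro Hinf.
    set (I := fun x => forall g, In g l -> ltrans g A x).
    destruct (ex_free_uf G (fun P => P = I)) as [p [Hfp HpS]].
    { intros L HL Hfin. apply Hinf. destruct Hfin as [m Hm]. exists m.
      intros x Hx. apply Hm. intros P HP. rewrite (HL P HP). exact Hx. }
    assert (Hp : ultrafilter p) by apply Hfp.
    apply (card_nodup (Ylim p A) n (map inv l)); auto.
    + apply H, W_limit; auto.
    + apply inv_nodup; auto.
    + rewrite length_map; auto.
    + intros y Hy. apply in_map_iff in Hy as [g [<- Hg]].
      unfold Ylim. eapply uf_up. apply Hp. apply (HpS I eq_refl).
      intros x Hx. destruct (Hx g Hg) as [a [Ha ->]]. rewrite inv_l; auto.
Qed.

Lemma part2 (A : subset G) : sparse A <-> (forall Y, W A Y -> finite Y).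
Proof.
  split.
  - intros Hsp Y HW. apply NNPP; intro Hinf.
    destruct (Hsp (fun x => Y (inv x))) as [F [HF Hfin]].
    { intro Hf. apply Hinf. apply finite_inv with (1 := Hf). intros x Hx. rewrite inv_inv; auto. }
    apply (W_incl A Y (map inv F) HW).
    + intros y Hy. apply in_map_iff in Hy as [g [<- Hg]]. apply HF; auto.
    + destruct Hfin as [m Hm]. exists m. intros x Hx. apply Hm. intros g Hg.
      rewrite <- (inv_inv g). apply Hx. apply in_map; auto.
  - intros H X Hinf. apply NNPP; intro Hn.
    destruct (ex_free_uf G (fun P => exists g, X g /\ P = ltrans g A)) as [p [Hfp HpS]].
    { intros L HL.
      assert (exists F, (forall g, In g F -> X g) /\ forall x, (forall g, In g F -> ltrans g A x) ->
                forall P, In P L -> P x) as [F [HF1 HF2]].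
      { clear -HL. induction L as [|P L IH].
        - exists []. split; simpl; tauto.
        - destruct IH as [F [HF1 HF2]]. intros; apply HL; simpl; auto.
          destruct (HL P (or_introl eq_refl)) as [g [Hg ->]].
          exists (g :: F). split. intros h [<-|Hh]; auto.
          intros x Hx Q [<-|HQ]. apply Hx; simpl; auto. apply HF2; auto. intros; apply Hx; simpl; auto. }
      intro Hfin. apply Hn. exists F. split; auto.
      destruct Hfin as [m Hm]. exists m. intros x Hx. apply Hm, HF2, Hx. }
    assert (Hp : ultrafilter p) by apply Hfp.
    apply Hinf. apply finite_inv with (Ylim p A).
    + apply H, W_limit; auto.
    + intros g Hg. unfold Ylim. eapply uf_up. apply Hp. apply HpS. exists g; split; eauto.
      intros x [a [Ha ->]]. rewrite inv_l; auto.
Qed.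

Lemma part3 (A : subset G) : scattered A <->
     (forall B : subset G, (forall x, B x -> A x) -> (exists b, B b) ->
        exists Y : subset G, finite Y /\
          closure (fun Z => exists b, B b /\ Z = rtrans B (inv b)) Y).
Proof.
  split.
  - intros Hsc B HBA [b Hb]. destruct (classic (finite B)) as [[lB HlB]|Hinf].
    + exists (rtrans B (inv b)). split.
      * exists (map (fun a => a * inv b) lB). intros x [a [Ha ->]]. apply (in_map (fun a => a * inv b)), HlB, Ha.
      * intros U [F HF]. exists (rtrans B (inv b)). split. exists b; auto. apply HF; tauto.
    + destruct (Hsc B HBA Hinf) as [p [Hfp [HpB [lD HD]]]].
      assert (Hp : ultrafilter p) by apply Hfp.
      exists (Ylim p B). split.
      * apply (fin_inj (fun g => ult_lmul g p)) with lD.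
        { intros x y E. apply (lmul_inj p); auto. }
        intros g Hg. apply HD. exists g. split; auto.
      * intros U [F HF].
        destruct (uf_ne p _ Hp (uf_int p _ _ Hp HpB (Tset p B F Hp))) as [x [Hx1 Hx2]].
        exists (rtrans B (inv x)). split. exists x; auto.
        apply HF. intros f Hf. rewrite rtrans_inv. apply Hx2; auto.
  - intros H X HXA Hinf.
    assert (Hne : exists b, X b).
    { apply NNPP; intro Hn. apply Hinf. exists []. intros x Hx; apply Hn; eauto. }
    destruct (H X HXA Hne) as [Y [[lY HlY] Hcl]].
    set (SF := fun F b => X b /\ forall f, In f F -> (X (f * b) <-> Y f)).
    assert (Hrt : forall b, exists f, X (f * b) /\ ~ Y f).
    { intro b. apply NNPP; intro Hn. apply Hinf.
      exists (map (fun f => f * b) lY). intros x Hx. rewrite <- (inv_r' x b).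
      apply (in_map (fun f => f * b)). apply HlY.
      apply NNPP; intro Hy. apply Hn. exists (x * inv b). split; auto. rewrite inv_r'; auto. }
    assert (HSF : forall F, infinite (SF F)).
    { intros F [lb Hlb].
      assert (exists Fe, forall b, In b lb -> exists f, In f Fe /\ X (f * b) /\ ~ Y f) as [Fe HFe].
      { clear -Hrt. induction lb as [|b lb IH].
        - exists []. intros b [].
        - destruct IH as [Fe HFe]. destruct (Hrt b) as [f Hf].
          exists (f :: Fe). intros c [<-|Hc]. exists f; simpl; auto.
          destruct (HFe c Hc) as [g [Hg1 Hg2]]. exists g; simpl; auto. }
      destruct (Hcl (fun Z => forall f, In f (F ++ Fe) -> (Z f <-> Y f))) as [Z [[b [Hb ->]] HZ]].
      { exists (F ++ Fe). auto. }
      assert (Hbl : In b lb).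
      { apply Hlb. split; auto. intros f Hf. rewrite <- rtrans_inv. apply HZ, in_or_app; auto. }
      destruct (HFe b Hbl) as [f [Hf1 [Hf2 Hf3]]].
      apply Hf3. apply HZ. apply in_or_app; auto. apply rtrans_inv; auto. }
    destruct (ex_free_uf G (fun P => exists F, P = SF F)) as [p [Hfp HpS]].
    { intros L HL.
      assert (exists F, forall x, SF F x -> forall P, In P L -> P x) as [F HF].
      { clear -HL. induction L as [|P L IH].
        - exists []. intros x _ P [].
        - destruct IH as [F HF]. intros; apply HL; simpl; auto.
          destruct (HL P (or_introl eq_refl)) as [F' ->].
          exists (F' ++ F). intros x [Hx1 Hx2] Q [<-|HQ].
          + split; auto. intros f Hf; apply Hx2, in_or_app; auto.
          + apply HF; auto. split; auto. intros f Hf; apply Hx2, in_or_app; auto. }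
      intro Hfin. apply (HSF F). destruct Hfin as [m Hm]. exists m. intros x Hx. apply Hm, HF, Hx. }
    assert (Hp : ultrafilter p) by apply Hfp.
    assert (Hkey : forall g, ult_lmul g p X -> Y g).
    { intros g Hg. apply NNPP; intro Hy.
      apply (uf_both p (fun x => X (g * x)) Hp Hg).
      eapply uf_up. apply Hp. apply HpS. exists [g]; reflexivity.
      intros x [_ Hx] Hgx. apply Hy. apply (Hx g); simpl; auto. }
    exists p. split; auto. split.
    + eapply uf_up. apply Hp. apply HpS. exists []; reflexivity. intros x [Hx _]; auto.
    + exists (map (fun g => ult_lmul g p) lY). intros q [g [-> Hg]].
      apply (in_map (fun g => ult_lmul g p)), HlY, Hkey, Hg.
Qed.

End Main.

Theorem theorem4p2 (G : group) (HG : infinite (fun _ : G => True)) (A : subset G) :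
  (forall n : nat, thin n A <-> (forall Y, W A Y -> card_le Y n)) /\
  (sparse A <-> (forall Y, W A Y -> finite Y)) /\
  (scattered A <->
     (forall B : subset G, (forall x, B x -> A x) -> (exists b, B b) ->
        exists Y : subset G, finite Y /\
          closure (fun Z => exists b, B b /\ Z = rtrans B (inv G b)) Y)).
Proof.
  split; [intro n; apply part1 | split; [apply part2 | apply part3]].
Qed.
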